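(* Fix $\varepsilon>0$, $\delta>0$ and a positive integer $t$. For a database $D$ (a finite multiset of points in $\mathbb{R}^d$), define $M(D)$ to be the largest $k\in\{0,1,\dots,t-1\}$ for which there exists a positive integer $g$ with $$\frac{V_{t-k-1,D}}{V_{t+k+g+1,D}}\cdot e^{-\varepsilon g/2}\le\delta,$$ where this inequality is understood to hold only when $V_{t-k-1,D}<\infty$ and $V_{t+k+g+1,D}>0$; if no such $k$ exists, $M(D)=-1$. Then: (1) $M$ has sensitivity 1: for all neighboring databases $D\sim D'$, $|M(D)-M(D')|\le 1$. (2) Assume that for every database $z$ under consideration the set $\{y:\tilde T_z(y)\ge t\}$ has positive Lebesgue measure (so that $A_t(z)$ below is well defined). Then for every database $z\in\mathrm{Unsafe}(\varepsilon,4e^{\varepsilon}\delta,t)$ we have $d_H(D,z)>M(D)$.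
   Context: Databases are finite multisets of points in $\mathbb{R}^d$; $D\sim D'$ (neighbors) means one is obtained from the other by adding or removing a single point. $d_H(D,z)$ is the minimum number of single-point additions/removals needed to transform $D$ into $z$. For $y\in\mathbb{R}^d$ and $j\in[d]$, $T_{D,j}(y)=\min\big(|\{x\in D: x_j\le y_j\}|,|\{x\in D: x_j\ge y_j\}|\big)$ (with multiplicity), and the approximate Tukey depth is $\tilde T_D(y)=\min_{j\in[d]}T_{D,j}(y)$. For an integer $p$, $V_{p,D}$ is the Lebesgue measure of $\{y:\tilde T_D(y)\ge p\}$ (so $V_{p,D}=+\infty$ for $p\le 0$). Two distributions $P,Q$ on $\mathbb{R}^d$ are $(\varepsilon,\delta)$-indistinguishable if for every measurable $W$, $P(W)\le e^{\varepsilon}Q(W)+\delta$ and $Q(W)\le e^{\varepsilon}P(W)+\delta$. For a database $z$, $A_t(z)$ is the restricted exponential mechanism: the distribution on $\mathbb{R}^d$ with density proportional to $\exp(\varepsilon\,\tilde T_z(y)/2)\cdot\mathbf{1}[\tilde T_z(y)\ge t]$. A database $z$ is $(\varepsilon,\delta,t)$-safe if $A_t(z)$ and $A_t(z')$ are $(\varepsilon,\delta)$-indistinguishable for every neighbor $z'\sim z$; $\mathrm{Unsafe}(\varepsilon,\delta,t)$ is the set of databases that are not $(\varepsilon,\delta,t)$-safe. *)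

(* Defs.v *)
From HB Require Import structures.
From mathcomp Require Import all_boot all_order all_algebra.
From mathcomp Require Import all_classical all_reals all_analysis.
Set Implicit Arguments. Unset Strict Implicit. Unset Printing Implicit Defensive.
Import Order.TTheory GRing.Theory Num.Theory.
Local Open Scope classical_set_scope.
Local Open Scope ring_scope.

Section Defs.
Variable R : realType.

Notation pt d := (d.-tuple (measurableTypeR R)).

(** Lebesgue measure on R^d, defined as the iterated product measure
    lambda_{n+1} = (lambda \x lambda_n) pushed forward by (x, v) |-> x :: v,
    with lambda_0 the Dirac mass at the empty tuple. *)
Fixpoint lebesgue_d (n : nat) : set (pt n) -> \bar R :=
  match n with
  | 0 => fun A => (\1_A [tuple] )%:E
  | n'.+1 => fun A =>
      @product_measure1 _ _ (measurableTypeR R) (pt n') R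
        (@lebesgue_measure R) (@lebesgue_d n')
        ((fun p : measurableTypeR R * pt n' => [tuple of p.1 :: p.2]) @^-1` A)
  end.

(** Databases: finite multisets of points, represented by sequences
    (considered up to permutation). *)
Definition database d := seq (pt d).

Definition neighbor d (D D' : database d) : Prop :=
  exists x, perm_eq D' (x :: D) \/ perm_eq D (x :: D').

Fixpoint chain d (k : nat) (D z : database d) : Prop :=
  match k with
  | 0 => perm_eq D z
  | k'.+1 => exists D1, neighbor D D1 /\ chain k' D1 z
  end.

Definition dH d (D z : database d) : nat :=
  match pselect (exists k, `[< chain k D z >]) with
  | left h => ex_minn h
  | right _ => 0%N
  end.

Definition Tj d (D : database d) (j : 'I_d) (y : pt d) : nat :=
  minn (count (fun x => tnth x j <= tnth y j) D)
       (count (fun x => tnth x j >= tnth y j) D).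

(** approximate Tukey depth: minimum over j in [d]
    (for d >= 1 the neutral element |D| is irrelevant, since Tj <= |D|). *)
Definition Ttilde d (D : database d) (y : pt d) : nat :=
  \big[minn/size D]_(j < d) Tj D j y.

Definition V d (p : int) (D : database d) : \bar R :=
  @lebesgue_d d [set y | p <= (Ttilde D y)%:Z].

Definition goodk d (eps delta : R) (t : nat) (D : database d) (k : nat) : Prop :=
  exists g : nat, (0 < g)%N /\
    let a := V (t%:Z - k%:Z - 1) D in
    let b := V (t%:Z + k%:Z + g%:Z + 1) D in
    [/\ (a < +oo)%E, (0 < b)%E &
        fine a / fine b * expR (- (eps * g%:R) / 2) <= delta].

Definition M d (eps delta : R) (t : nat) (D : database d) : int :=
  \big[Num.max/(-1)%R]_(k < t | `[< goodk eps delta t D k >]) (k%:Z).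

(** unnormalized density of the restricted exponential mechanism A_t(z) *)
Definition mech_density d (eps : R) (t : nat) (z : database d) (y : pt d) : \bar R :=
  (if (t <= Ttilde z y)%N then expR (eps * (Ttilde z y)%:R / 2) else 0)%:E.

Definition mech d (eps : R) (t : nat) (z : database d) (W : set (pt d)) : R :=
  fine (\int[@lebesgue_d d]_(y in W) mech_density eps t z y)%E /
  fine (\int[@lebesgue_d d]_(y in [set: pt d]) mech_density eps t z y)%E.

Definition indist d (eps delta : R) (P Q : set (pt d) -> R) : Prop :=
  forall W : set (pt d), measurable W ->
    P W <= expR eps * Q W + delta /\ Q W <= expR eps * P W + delta.

Definition safe d (eps delta : R) (t : nat) (z : database d) : Prop :=
  forall z', neighbor z z' -> indist eps delta (mech eps t z) (mech eps t z').

Definition Unsafe d (eps delta : R) (t : nat) : set (database d) :=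
  [set z | ~ safe eps delta t z].

End Defs.

Arguments lebesgue_d {R} n.

(* Main.v *)
Require Import Defs.
From HB Require Import structures.
From mathcomp Require Import all_boot all_order all_algebra.
From mathcomp Require Import all_classical all_reals all_analysis.
From mathcomp Require Import measurable_realfun lebesgue_integral.
From mathcomp Require Import zify ring lra.
Import Order.TTheory GRing.Theory Num.Theory.
Local Open Scope classical_set_scope.
Local Open Scope ring_scope.
Set Implicit Arguments. Unset Strict Implicit. Unset Printing Implicit Defensive.

Section Meas.
Variable R : realType.
Notation pt d := (d.-tuple (measurableTypeR R)).

Section step.
Variable n : nat.
Variable m : {sigma_finite_measure set (pt n) -> \bar R}.

Definition consf (p : measurableTypeR R * pt n) : pt n.+1 := [tuple of p.1 :: p.2].
Definition unconsf (t : pt n.+1) : measurableTypeR R * pt n := (thead t, [tuple of behead t]).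

Lemma mconsf : measurable_fun setT consf.
Proof. exact: measurable_cons. Qed.

Lemma munconsf : measurable_fun setT unconsf.
Proof.
apply: measurable_fun_pair; last exact: measurable_behead.
exact: measurable_tnth.
Qed.

Lemma consK : cancel unconsf consf.
Proof. by move=> t; apply: val_inj => /=; rewrite [in RHS](tuple_eta t). Qed.
Lemma unconsK : cancel consf unconsf.
Proof. case=> x v; rewrite /unconsf /consf /=; congr pair; exact: val_inj. Qed.

Definition lstep (A : set (pt n.+1)) : \bar R :=
  (@lebesgue_measure R \x m)%E (consf @^-1` A).

Let lstep0 : lstep set0 = 0%E.
Proof. by rewrite /lstep preimage_set0 measure0. Qed.
Let lstep_ge0 A : (0 <= lstep A)%E.
Proof. exact: measure_ge0. Qed.
Let lstep_sa : semi_sigma_additive lstep.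
Proof.
move=> F mF tF mUF; rewrite /lstep preimage_bigcup.
apply: measure_semi_sigma_additive.
- by move=> k; rewrite -[X in measurable X]setTI; exact: mconsf.
- apply/trivIsetP => /= i j _ _ ij; rewrite -preimage_setI.
  by move/trivIsetP : tF => /(_ _ _ _ _ ij) ->//; rewrite preimage_set0.
- by rewrite -preimage_bigcup -[X in measurable X]setTI; exact: mconsf.
Qed.

HB.instance Definition _ := isMeasure.Build _ _ _ lstep lstep0 lstep_ge0 lstep_sa.

Let prod_sf : sigma_finite setT (@lebesgue_measure R \x m)%E.
Proof.
have /sigma_finiteP[F [TF ndF Foo]] := sigma_finiteT (@lebesgue_measure R).
have /sigma_finiteP[G [TG ndG Goo]] := sigma_finiteT m.
exists (fun k => F k `*` G k).
 rewrite -setXTT TF TG predeqE => -[x y]; split.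
    move=> [/= [i _ Fnx] [k _ Gky]]; exists (maxn i k) => //; split.
    - by move: x Fnx; exact/subsetPset/ndF/leq_maxl.
    - by move: y Gky; exact/subsetPset/ndG/leq_maxr.
  by move=> [i _ []/= ? ?]; split; exists i.
move=> k; have [? ?] := Foo k; have [? ?] := Goo k.
split; first exact: measurableX.
by rewrite product_measure1E// lte_mul_pinfty// ge0_fin_numE.
Qed.

Let lstep_sf : sigma_finite setT lstep.
Proof.
have [F FT Fm] := prod_sf.
exists (fun i => unconsf @^-1` F i).
  apply/seteqP; split => // t _.
  have : [set: _] (unconsf t) by [].
  by rewrite FT => -[i _ Fi]; exists i.
move=> i; split.
  by rewrite -[X in measurable X]setTI; apply: munconsf; case: (Fm i).
rewrite /lstep.
have -> : consf @^-1` (unconsf @^-1` F i) = F i.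
  by apply/funext => p; rewrite /preimage /= unconsK.
by case: (Fm i).
Qed.

HB.instance Definition _ := Measure_isSigmaFinite.Build _ _ _ lstep lstep_sf.
End step.

Fixpoint leb (n : nat) : {sigma_finite_measure set (pt n) -> \bar R} :=
  match n with
  | 0 => [the {sigma_finite_measure set (pt 0) -> \bar R} of @dirac _ (pt 0) [tuple] R]
  | n'.+1 => [the {sigma_finite_measure set (pt n'.+1) -> \bar R} of lstep (leb n')]
  end.

Lemma lebE n : lebesgue_d n = leb n.
Proof.
elim: n => [|n IH]; apply/funext => A //=.
by rewrite IH.
Qed.
End Meas.

Section Mes.
Variable R : realType.
Notation pt d := (d.-tuple (measurableTypeR R)).
Variable d : nat.

Lemma mcount (D : database R d) (j : 'I_d) (P : R -> R -> bool) :
  (forall x : pt d, measurable [set y : pt d | P (tnth x j) (tnth y j)]) ->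
  measurable_fun setT (fun y : pt d => ((count (fun x => P (tnth x j) (tnth y j)) D)%:R : R)).
Proof.
move=> mP.
have -> : (fun y : pt d => ((count (fun x => P (tnth x j) (tnth y j)) D)%:R : R)) =
  (fun y => \sum_(x <- D) \1_[set y : pt d | P (tnth x j) (tnth y j)] y).
  apply/funext => y; elim: D => [|x D IH]; first by rewrite big_nil.
  rewrite big_cons /= natrD IH; congr (_ + _).
  rewrite indicE; case h: (P _ _) => /=.
    by rewrite mem_set.
  by rewrite memNset /= ?h.

apply: measurable_sum => x; exact: measurable_indic.
Qed.

Lemma mle_set (x : pt d) (j : 'I_d) : measurable [set y : pt d | tnth x j <= tnth y j].
Proof.
rewrite -[X in measurable X]setTI.
have -> : [set y : pt d | tnth x j <= tnth y j] = (fun y => tnth y j) @^-1` `[tnth x j, +oo[%classic.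
  by apply/seteqP; split => y /=; rewrite in_itv /= andbT.
apply: measurable_tnth => //; exact: measurable_itv.
Qed.

Lemma mge_set (x : pt d) (j : 'I_d) : measurable [set y : pt d | tnth x j >= tnth y j].
Proof.
rewrite -[X in measurable X]setTI.
have -> : [set y : pt d | tnth x j >= tnth y j] = (fun y => tnth y j) @^-1` `]-oo, tnth x j]%classic.
  by apply/seteqP; split => y /=; rewrite in_itv /=.
apply: measurable_tnth => //; exact: measurable_itv.
Qed.

Lemma mTj (D : database R d) (j : 'I_d) :
  measurable_fun setT (fun y => ((Tj D j y)%:R : R)).
Proof.
have -> : (fun y => ((Tj D j y)%:R : R)) =
  (fun y => ((count (fun x => tnth x j <= tnth y j) D)%:R : R)) \min
  (fun y => ((count (fun x => tnth x j >= tnth y j) D)%:R : R)).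
  by apply/funext => y; rewrite /Tj -minEnat natr_min.
apply: measurable_minr.
  by apply: (@mcount D j (fun a b => a <= b)) => x; exact: mle_set.
by apply: (@mcount D j (fun a b => b <= a)) => x; exact: mge_set.
Qed.

Lemma mbigmin (I : Type) (s : seq I) (c : R) (g : I -> pt d -> R) :
  (forall i, measurable_fun setT (g i)) ->
  measurable_fun setT (fun y => \big[Num.min/c]_(i <- s) g i y).
Proof.
move=> mg; elim: s => [|i s IH].
  under eq_fun do rewrite big_nil; exact: measurable_cst.
under eq_fun do rewrite big_cons.
exact: measurable_minr.
Qed.

Definition Tr (D : database R d) (y : pt d) : R := (Ttilde D y)%:R.

Lemma mTr (D : database R d) : measurable_fun setT (Tr D).
Proof.
have -> : Tr D = (fun y => \big[Num.min/(size D)%:R]_(j < d) ((Tj D j y)%:R : R)).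
  apply/funext => y; rewrite /Tr /Ttilde.
  by rewrite (big_morph (fun n : nat => (n%:R : R)) (op1 := Num.min) (id1 := (size D)%:R) _ (erefl _)) //
    => a b; rewrite -minEnat natr_min.
by apply: mbigmin => j; exact: mTj.
Qed.

Lemma mTset (D : database R d) (p : int) :
  measurable [set y : pt d | p <= (Ttilde D y)%:Z].
Proof.
rewrite -[X in measurable X]setTI.
have -> : [set y : pt d | p <= (Ttilde D y)%:Z] = Tr D @^-1` `[p%:~R, +oo[%classic.
  apply/seteqP; split => y /=; rewrite in_itv /= andbT /Tr.
    by move=> h; rewrite -(@ler_int R) in h.
  by move=> h; rewrite -(@ler_int R).
apply: mTr => //; exact: measurable_itv.
Qed.

Lemma mTsetn (D : database R d) (p : nat) :
  measurable [set y : pt d | (p <= Ttilde D y)%N].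
Proof.
have -> : [set y : pt d | (p <= Ttilde D y)%N] = [set y : pt d | p%:Z <= (Ttilde D y)%:Z].
  by apply/seteqP; split => y /=; rewrite lez_nat.
exact: mTset.
Qed.

Lemma mdens (eps : R) (t : nat) (z : database R d) :
  measurable_fun setT (fun y : pt d => (mech_density eps t z y : \bar R)).
Proof.
have -> : mech_density eps t z = EFin \o (fun y => \1_[set y | (t <= Ttilde z y)%N] y * expR (eps * Tr z y / 2)).
  apply/funext => y; rewrite /mech_density /= indicE /Tr.
  case: ifP => h.
    by rewrite mem_set ?mul1r.
  by rewrite memNset ?mul0r //= h.
apply/measurable_EFinP; apply: measurable_funM.
  by apply: measurable_indic; exact: mTsetn.
apply: measurableT_comp; first exact: measurable_expR.
apply: measurable_funM; last exact: measurable_cst.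
apply: measurable_funM; first exact: measurable_cst.
exact: mTr.
Qed.
End Mes.

Section Comb.
Variable R : realType.
Notation pt d := (d.-tuple (measurableTypeR R)).
Variable d : nat.
Implicit Types (D z : database R d) (y : pt d).

Lemma Ttilde_perm D D' y : perm_eq D D' -> Ttilde D y = Ttilde D' y.
Proof.
move=> pDD; rewrite /Ttilde (perm_size pDD); apply: eq_bigr => j _.
by rewrite /Tj !(permP pDD).
Qed.

Lemma Ttilde_cons x D y :
  (Ttilde D y <= Ttilde (x :: D) y <= Ttilde D y + 1)%N.
Proof.
rewrite /Ttilde /=.
apply: (big_ind2 (fun a b : nat => (a <= b <= a + 1)%N)).
- by rewrite addn1 leqnSn leqnn.
- move=> a1 a2 b1 b2 /andP[h1 h2] /andP[h3 h4]; apply/andP; split; lia.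
- move=> j _; rewrite /Tj /=.
  case: (tnth x j <= tnth y j); case: (tnth y j <= tnth x j) => /=; apply/andP; split; lia.
Qed.

Lemma Ttilde_nb D D' y : neighbor D D' ->
  (Ttilde D' y <= Ttilde D y + 1)%N /\ (Ttilde D y <= Ttilde D' y + 1)%N.
Proof.
case=> x [] p.
  rewrite (Ttilde_perm y p); have := Ttilde_cons x D y; lia.
rewrite (Ttilde_perm y p); have := Ttilde_cons x D' y; lia.
Qed.

Lemma nb_sym D D' : neighbor D D' -> neighbor D' D.
Proof. by case=> x [] p; exists x; [right|left]. Qed.

Lemma Ttilde_chain h D z : chain h D z -> forall y,
  (Ttilde z y <= Ttilde D y + h)%N /\ (Ttilde D y <= Ttilde z y + h)%N.
Proof.
elim: h D => [|h IH] D /=.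
  by move=> p y; rewrite (Ttilde_perm y p) !addn0.
move=> [D1 [nb ch]] y; have [h1 h2] := IH _ ch y; have [h3 h4] := Ttilde_nb y nb.
lia.
Qed.

Lemma chain_add k D z x : chain k D z -> chain k.+1 D (x :: z).
Proof.
elim: k D => [|k IH] D /=.
  move=> p; exists (x :: D); split; first by exists x; left.
  by rewrite perm_cons.
move=> [D1 [nb ch]]; exists D1; split => //; exact: IH.
Qed.

Lemma chain_nil z : chain (size z) [::] z.
Proof. by elim: z => [|x z IH] //=; exact: chain_add. Qed.

Lemma chain_ex D z : chain (size D + size z) D z.
Proof.
elim: D => [|x D IH] /=; first exact: chain_nil.
by exists D; split => //; exists x; right.
Qed.

Lemma chain_dH D z : chain (dH D z) D z.
Proof.
rewrite /dH; case: pselect => [h|nh].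
  by case: ex_minnP => m /asboolP.
exfalso; apply: nh; exists (size D + size z); apply/asboolP; exact: chain_ex.
Qed.
End Comb.

Section VM.
Variable R : realType.
Notation pt d := (d.-tuple (measurableTypeR R)).
Variable d : nat.
Implicit Types (D z : database R d) (y : pt d).

Lemma VE p D : V p D = leb R d [set y | p <= (Ttilde D y)%:Z].
Proof. by rewrite /V lebE. Qed.

Lemma Vmono (D1 D2 : database R d) (c : nat) (p q : int) :
  (forall y, (Ttilde D1 y <= Ttilde D2 y + c)%N) -> q <= p - c%:Z ->
  (V p D1 <= V q D2)%E.
Proof.
move=> hT hq; rewrite !VE; apply: le_measure; rewrite ?inE; try exact: mTset.
move=> y /= hp; have := hT y; lia.
Qed.

Lemma Vanti (D : database R d) (p q : int) : q <= p -> (V p D <= V q D)%E.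
Proof. by move=> h; apply: (@Vmono D D 0); [move=> y; rewrite addn0|rewrite subr0]. Qed.

Lemma V_ge0 p D : (0 <= V p D)%E.
Proof. by rewrite VE measure_ge0. Qed.

Variables (eps delta : R) (t : nat).

Lemma M_cases D : M eps delta t D = -1 \/
  exists k : 'I_t, goodk eps delta t D k /\ M eps delta t D = k%:Z.
Proof.
rewrite /M; apply: (big_ind (fun v => v = -1 \/ exists k : 'I_t, goodk eps delta t D k /\ v = k%:Z)).
- by left.
- move=> a b ha hb; rewrite /Num.max; case: ifP => _; [exact: hb|exact: ha].
- by move=> k /asboolP gk; right; exists k.
Qed.

Lemma M_ge (D : database R d) (k : 'I_t) : goodk eps delta t D k -> k%:Z <= M eps delta t D.
Proof.
move=> gk; rewrite /M.
apply: (@le_bigmax_cond _ _ _ (-1) k (fun k : 'I_t => `[< goodk eps delta t D k >]) (fun k : 'I_t => k%:Z)).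
exact/asboolP.
Qed.

Lemma M_gem1 D : -1 <= M eps delta t D.
Proof. by case: (M_cases D) => [->|[k [_ ->]]]. Qed.
End VM.

Section P1.
Variable R : realType.
Notation pt d := (d.-tuple (measurableTypeR R)).

Lemma fine_mono (x y : \bar R) : (0 <= x)%E -> (x <= y)%E -> (y < +oo)%E -> fine x <= fine y.
Proof.
move=> x0 xy yoo; apply: fine_le => //; rewrite ?inE ge0_fin_numE //; idtac.
- exact: le_lt_trans yoo.
- exact: le_trans xy.
Qed.

Lemma ratio_le (a' a b b' : R) : 0 <= a' -> a' <= a -> 0 < b -> b <= b' -> a' / b' <= a / b.
Proof.
move=> a0 aa b0 bb; have b'0 : 0 < b' by exact: lt_le_trans bb.
rewrite ler_pdivrMr // mulrAC ler_pdivlMr //.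
have a0' : 0 <= a by exact: le_trans aa.
nra.
Qed.

Variable d : nat.
Variables (eps delta : R) (t : nat).
Hypothesis hdelta : 0 < delta.

Lemma good_nb (D D' : database R d) (k : nat) :
  (forall y, (Ttilde D' y <= Ttilde D y + 1)%N /\ (Ttilde D y <= Ttilde D' y + 1)%N) ->
  goodk eps delta t D k.+1 -> goodk eps delta t D' k.
Proof.
move=> hT [g [g0 /= [aoo b0 rat]]]; exists g; split => //=.
set a := V _ D in aoo rat *; set b := V _ D in b0 rat *.
set a' := V _ D'; set b' := V _ D'.
have aa : (a' <= a)%E.
  apply: (@Vmono _ _ _ _ 1) => [y|]; first by case: (hT y).
  rewrite /=; lia.
have bb : (b <= b')%E.
  apply: (@Vmono _ _ _ _ 1) => [y|]; first by case: (hT y).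
  rewrite /=; lia.
have ba : (b <= a)%E by apply: Vanti; lia.
have boo : (b < +oo)%E by exact: le_lt_trans aoo.
split.
- exact: le_lt_trans aoo.
- exact: lt_le_trans bb.
- have [b'oo|] := ltP b' +oo%E; last first.
    rewrite leye_eq => /eqP ->; rewrite /= invr0 mulr0 mul0r; exact: ltW.
  apply: le_trans rat; apply: ler_wpM2r; first exact/ltW/expR_gt0.
  apply: ratio_le.
  + exact/fine_ge0/V_ge0.
  + apply: fine_mono => //; exact: V_ge0.
  + by rewrite fine_gt0 // b0 boo.
  + apply: fine_mono => //; exact: V_ge0.
Qed.
End P1.

Section P1b.
Variable R : realType.
Variable d : nat.
Variables (eps delta : R) (t : nat).
Hypothesis hdelta : 0 < delta.

Lemma M_nb (D D' : database R d) : neighbor D D' ->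
  M eps delta t D - 1 <= M eps delta t D'.
Proof.
move=> nb; have hT := fun y => Ttilde_nb y nb.
have hm := M_gem1 eps delta t D'.
case: (M_cases eps delta t D) => [->|[k [gk ->]]].
  by apply: le_trans hm; rewrite lerBlDr; lia.
case: k gk => [[|k] kt] /= gk.
  by rewrite sub0r.
have kt' : (k < t)%N by lia.
have := @M_ge R d eps delta t D' (Ordinal kt') (good_nb hdelta hT gk).
rewrite /=; lia.
Qed.

Lemma part1 (D D' : database R d) : neighbor D D' ->
  `|M eps delta t D - M eps delta t D'| <= 1.
Proof.
move=> nb; have h1 := M_nb nb; have h2 := M_nb (nb_sym nb).
rewrite ler_norml; apply/andP; split; lia.
Qed.
End P1b.

Section Int.
Variable R : realType.
Notation pt d := (d.-tuple (measurableTypeR R)).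
Variable d : nat.
Variables (eps : R) (t : nat).
Hypothesis heps : 0 < eps.
Notation mu := (leb R d).

Definition cc (n : nat) : R := expR (eps * n%:R / 2).

Lemma dens_eq (w : database R d) y : mech_density eps t w y =
  (if (t <= Ttilde w y)%N then cc (Ttilde w y) else 0)%:E.
Proof. by []. Qed.

Lemma dens_ge0 (w : database R d) y : (0 <= mech_density eps t w y)%E.
Proof. rewrite dens_eq lee_fin; case: ifP => // _; exact: expR_ge0. Qed.

Lemma cc_mono (m n : nat) : (m <= n)%N -> cc m <= cc n.
Proof.
move=> mn; rewrite /cc ler_expR.
by rewrite ler_pM2r ?invr_gt0 ?ltr0n // ler_pM2l // ler_nat.
Qed.

Lemma ccS (n : nat) : cc n.+1 = expR (eps / 2) * cc n.
Proof. rewrite /cc -expRD -addn1 natrD; congr expR; ring. Qed.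

Lemma int_cind (c : R) (S W : set (pt d)) : measurable S -> measurable W -> 0 <= c ->
  (\int[mu]_(y in W) (c%:E * (\1_S y)%:E) = c%:E * mu (S `&` W))%E.
Proof.
move=> mS mW c0; rewrite ge0_integralZl_EFin //.
- by rewrite (integral_indic _ mW mS).
- apply/measurable_EFinP; exact: measurable_indic.
Qed.

Lemma Ttilde_size (w : database R d) y : (Ttilde w y <= size w)%N.
Proof.
rewrite /Ttilde; apply: (big_ind (fun v => v <= size w)%N) => //.
- move=> a b ha hb; lia.
- move=> j _; rewrite /Tj; apply: leq_trans (geq_minl _ _) _; exact: count_size.
Qed.

Lemma pw_bound (n1 n2 : nat) (b : bool) : (n1 <= n2 + 1)%N -> ((t <= n1)%N -> b) ->
  (if (t <= n1)%N then cc n1 else 0) <=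
  expR (eps / 2) * (if (t <= n2)%N then cc n2 else 0) + cc t * b%:R.
Proof.
move=> h12 hb.
have h2 : 0 <= (if (t <= n2)%N then cc n2 else 0) by case: ifP => // _; exact: expR_ge0.
have h3 : 0 <= expR (eps / 2) by exact: expR_ge0.
have h4 : 0 <= cc t * b%:R by apply: mulr_ge0; [exact: expR_ge0|exact: ler0n].
case: ifPn => t1; last by apply: addr_ge0 => //; exact: mulr_ge0.
rewrite (hb t1) mulr1; case: ifPn => t2.
  apply: le_trans (_ : expR (eps/2) * cc n2 <= _); last first.
    by rewrite lerDl; exact: expR_ge0.
  by rewrite -ccS; apply: cc_mono; lia.
rewrite mulr0 add0r; apply: cc_mono; lia.
Qed.

Lemma int_bound (w w' : database R d) (A W : set (pt d)) :
  measurable A -> measurable W ->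
  (forall y, (Ttilde w y <= Ttilde w' y + 1)%N) ->
  (forall y, (t <= Ttilde w y)%N -> A y) ->
  (\int[mu]_(y in W) mech_density eps t w y <=
   (expR (eps / 2))%:E * \int[mu]_(y in W) mech_density eps t w' y + (cc t)%:E * mu A)%E.
Proof.
move=> mA mW hT hA.
have md := fun w => measurable_funS measurableT (@subsetT _ W) (mdens eps t w).
apply: le_trans (_ : (\int[mu]_(y in W) ((expR (eps / 2))%:E * mech_density eps t w' y +
   (cc t)%:E * (\1_A y)%:E) <= _)%E).
  apply: ge0_le_integral => //.
  - by move=> y _; exact: dens_ge0.
  - apply: emeasurable_funD.
      by apply: emeasurable_funM => //; exact: measurable_cst.
    apply: emeasurable_funM; first exact: measurable_cst.
    by apply/measurable_EFinP; exact: measurable_indic.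
  - move=> y _; rewrite !dens_eq indicE -!EFinM -EFinD lee_fin.
    apply: pw_bound; first exact: hT.
    by move=> /hA Ay; rewrite mem_set.
have m1 : measurable_fun W (fun y => (expR (eps / 2))%:E * mech_density eps t w' y)%E.
  by apply: emeasurable_funM => //; exact: measurable_cst.
have m2 : measurable_fun W (fun y => (cc t)%:E * (\1_A y)%:E)%E.
  apply: emeasurable_funM; first exact: measurable_cst.
  by apply/measurable_EFinP; exact: measurable_indic.
have p1 : forall y, W y -> (0 <= (expR (eps / 2))%:E * mech_density eps t w' y)%E.
  by move=> y _; apply: mule_ge0; [rewrite lee_fin; exact: expR_ge0|exact: dens_ge0].
have p2 : forall y, W y -> (0 <= (cc t)%:E * (\1_A y)%:E)%E.
  by move=> y _; apply: mule_ge0; rewrite lee_fin ?expR_ge0 //.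
rewrite (ge0_integralD _ mW p1 m1 p2 m2).
have p3 : forall y, W y -> (0 <= mech_density eps t w' y)%E by move=> y _; exact: dens_ge0.
rewrite (ge0_integralZl_EFin _ mW p3 (md w')); last exact: expR_ge0.
rewrite int_cind //; last exact: expR_ge0.
apply: leeD => //; apply: lee_pmul => //.
+ by rewrite lee_fin; exact: expR_ge0.
+ by apply: le_measure; rewrite ?inE //; exact: measurableI.
Qed.

Lemma int_upper (w : database R d) (A : set (pt d)) : measurable A ->
  (forall y, (t <= Ttilde w y)%N -> A y) ->
  (\int[mu]_(y in setT) mech_density eps t w y <= (cc (size w))%:E * mu A)%E.
Proof.
move=> mA hA.
apply: le_trans (_ : (\int[mu]_(y in setT) ((cc (size w))%:E * (\1_A y)%:E) <= _)%E).
  apply: ge0_le_integral => //.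
  - by move=> y _; exact: dens_ge0.
  - exact: mdens.
  - apply: emeasurable_funM; first exact: measurable_cst.
    by apply/measurable_EFinP; exact: measurable_indic.
  - move=> y _; rewrite dens_eq indicE -EFinM lee_fin.
    case: ifPn => ht.
      by rewrite (mem_set (hA _ ht)) mulr1; apply: cc_mono; exact: Ttilde_size.
    by apply: mulr_ge0; [exact: expR_ge0|exact: ler0n].
by rewrite int_cind // ?setIT //; exact: expR_ge0.
Qed.

Lemma int_lower (w : database R d) (q : nat) : (t <= q)%N ->
  ((cc q)%:E * mu [set y | (q <= Ttilde w y)%N] <= \int[mu]_(y in setT) mech_density eps t w y)%E.
Proof.
move=> tq.
have mB := mTsetn w q.
rewrite -[X in (_ * mu X)%E]setIT -int_cind //; last exact: expR_ge0.
apply: ge0_le_integral => //.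
- by move=> y _; apply: mule_ge0; rewrite lee_fin ?expR_ge0 //.
- apply: emeasurable_funM; first exact: measurable_cst.
  by apply/measurable_EFinP; exact: measurable_indic.
- exact: mdens.
- move=> y _; rewrite dens_eq indicE -EFinM lee_fin.
  case: (boolP (y \in _)) => [/set_mem /= hq|_].
    by rewrite mulr1 ifT; [apply: cc_mono|apply: leq_trans hq].
  rewrite mulr0; case: ifP => // _; exact: expR_ge0.
Qed.
End Int.

Section Fin.
Variable R : realType.

Lemma final_real (e E delta J1 J2 Z1 Z2 : R) :
  1 <= e -> 0 < Z1 -> 0 < Z2 -> 0 <= J2 -> J2 <= Z2 -> J1 <= e * J2 + E ->
  Z2 <= e * Z1 + E -> 0 <= E -> E <= delta * Z1 ->
  J1 / Z1 <= e * e * (J2 / Z2) + 4 * (e * e) * delta.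
Proof.
move=> e1 z1 z2 j20 j2z j1 zz e0 ed.
set Q := J2 / Z2.
have hQ : J2 = Q * Z2 by rewrite /Q divfK // gt_eqF.
have Q0 : 0 <= Q by rewrite /Q divr_ge0 // ltW.
have Q1 : Q <= 1 by rewrite /Q ler_pdivrMr // mul1r.
have d0 : 0 <= delta.
  have : 0 <= delta * Z1 by exact: le_trans ed.
  by rewrite pmulr_lge0.
rewrite ler_pdivrMr //.
have s1 : J1 <= e * Q * Z2 + E by rewrite hQ mulrA in j1.
have eQ : 0 <= e * Q by apply: mulr_ge0 => //; lra.
have s2 : e * Q * Z2 <= e * Q * (e * Z1 + E).
  have q2 : 0 <= e * Z1 + E - Z2 by lra.
  have := mulr_ge0 eQ q2; nra.
have s3 : e * Q * E <= e * delta * Z1.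
  have q1 : 0 <= 1 - Q by lra.
  have h1 : Q * E <= E by have := mulr_ge0 q1 e0; nra.
  have q3 : 0 <= delta * Z1 - Q * E by lra.
  have q4 : 0 <= e by lra.
  have := mulr_ge0 q4 q3; nra.
have dz : 0 <= delta * Z1 by apply: mulr_ge0 => //; lra.
have q5 : 0 <= 2 * e * e - e by nra.
have q6 : 0 <= 2 * e * e - 1 by nra.
have s4 := mulr_ge0 dz q5.
have s5 := mulr_ge0 dz q6.
nra.
Qed.
End Fin.

Section Pair.
Variable R : realType.
Notation pt d := (d.-tuple (measurableTypeR R)).
Variable d : nat.
Variables (eps delta : R) (t : nat).
Hypothesis heps : 0 < eps.
Notation mu := (leb R d).

Lemma int_fin (w : database R d) (W : set (pt d)) : measurable W ->
  (\int[mu]_(y in setT) mech_density eps t w y < +oo)%E ->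
  [/\ (\int[mu]_(y in W) mech_density eps t w y =
        (fine (\int[mu]_(y in W) mech_density eps t w y))%:E)%E,
      0 <= fine (\int[mu]_(y in W) mech_density eps t w y) &
      fine (\int[mu]_(y in W) mech_density eps t w y) <=
      fine (\int[mu]_(y in setT) mech_density eps t w y)].
Proof.
move=> mW hoo.
have h0 : (0 <= \int[mu]_(y in W) mech_density eps t w y)%E.
  by apply: integral_ge0 => y _; exact: dens_ge0.
have hle : (\int[mu]_(y in W) mech_density eps t w y <= \int[mu]_(y in setT) mech_density eps t w y)%E.
  apply: ge0_subset_integral => //; first exact: mdens.
  by move=> y _; exact: dens_ge0.
split.
- by rewrite fineK // ge0_fin_numE //; exact: le_lt_trans hoo.
- exact: fine_ge0.
- apply: fine_le => //; rewrite ge0_fin_numE //; first exact: le_lt_trans hoo.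
  exact: le_trans hle.
Qed.
End Pair.

Section Pair2.
Variable R : realType.
Notation pt d := (d.-tuple (measurableTypeR R)).
Variable d : nat.
Variables (eps delta : R) (t : nat).
Hypothesis heps : 0 < eps.
Notation mu := (leb R d).
Notation I w := (\int[mu]_(y in setT) mech_density eps t w y)%E.

Lemma mechE (w : database R d) W : mech eps t w W =
  fine (\int[mu]_(y in W) mech_density eps t w y)%E / fine (I w).
Proof. by rewrite /mech lebE. Qed.

Lemma I_fin (w : database R d) (A : set (pt d)) : measurable A -> (mu A < +oo)%E ->
  (forall y, (t <= Ttilde w y)%N -> A y) -> (I w < +oo)%E.
Proof.
move=> mA Aoo hA; apply: le_lt_trans (int_upper heps mA hA) _.
by apply: lte_mul_pinfty => //; rewrite lee_fin; exact: expR_ge0.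
Qed.

Lemma one_dir (w1 w2 : database R d) (A W : set (pt d)) :
  measurable A -> (mu A < +oo)%E -> measurable W ->
  (forall y, (Ttilde w1 y <= Ttilde w2 y + 1)%N) ->
  (forall y, (Ttilde w2 y <= Ttilde w1 y + 1)%N) ->
  (forall y, (t <= Ttilde w1 y)%N -> A y) -> (forall y, (t <= Ttilde w2 y)%N -> A y) ->
  0 < fine (I w1) -> 0 < fine (I w2) ->
  cc eps t * fine (mu A) <= delta * fine (I w1) ->
  mech eps t w1 W <= expR eps * mech eps t w2 W + 4 * expR eps * delta.
Proof.
move=> mA Aoo mW h12 h21 hA1 hA2 z1 z2 hE.
have f1 := I_fin mA Aoo hA1; have f2 := I_fin mA Aoo hA2.
have [eJ1 J10 J1Z] := int_fin mW f1.
have [eJ2 J20 J2Z] := int_fin mW f2.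
have [eZ1 _ _] := int_fin measurableT f1.
have [eZ2 _ _] := int_fin measurableT f2.
have eA : mu A = (fine (mu A))%:E by rewrite fineK // ge0_fin_numE // measure_ge0.
have b1 := int_bound heps mA mW h12 hA1.
have b2 := int_bound heps mA measurableT h21 hA2.
rewrite eJ1 eJ2 eA -EFinM -EFinM -EFinD lee_fin in b1.
rewrite eZ1 eZ2 eA -EFinM -EFinM -EFinD lee_fin in b2.
have ee : expR eps = expR (eps / 2) * expR (eps / 2).
  by rewrite -expRD; congr expR; field.
rewrite !mechE ee.
have e1 : 1 <= expR (eps / 2).
  by rewrite -expR0 ler_expR; apply: divr_ge0 => //; exact: ltW.
have E0 : 0 <= cc eps t * fine (mu A).
  by apply: mulr_ge0; [exact: expR_ge0|apply: fine_ge0; exact: measure_ge0].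
exact: (final_real e1 z1 z2 J20 J2Z b1 b2 E0 hE).
Qed.
End Pair2.

Section P2.
Variable R : realType.

Lemma Ebound (ct cq fa fb fA X delta Z : R) : 0 < fb -> 0 <= fA -> fA <= fa ->
  0 <= ct -> ct <= X * cq -> 0 <= X -> 0 < cq -> fa / fb * X <= delta ->
  cq * fb <= Z -> 0 < delta -> ct * fA <= delta * Z.
Proof.
move=> fb0 fA0 fAa ct0 ctX X0 cq0 rat cZ d0.
have fa0 : 0 <= fa by lra.
have r2 : fa * X <= delta * fb.
  have := ler_wpM2r (ltW fb0) rat.
  by rewrite mulrAC divfK ?gt_eqF.
have s1 : ct * fA <= X * cq * fa.
  have := mulr_ge0 (_ : 0 <= X * cq - ct) fA0.
  have := mulr_ge0 (_ : 0 <= X * cq) (_ : 0 <= fa - fA).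
  nra.
have s2 : X * cq * fa <= cq * (delta * fb).
  have := ler_wpM2l (ltW cq0) r2; rewrite mulrA; nra.
have s3 : cq * (delta * fb) <= delta * Z.
  have := ler_wpM2l (ltW d0) cZ; nra.
lra.
Qed.
End P2.

Lemma ar1 (t k h Tz TD : nat) : (t - 1 <= Tz)%N -> (Tz <= TD + h)%N -> (h <= k)%N ->
  t%:Z - k%:Z - 1 <= TD%:Z.
Proof. lia. Qed.
Lemma ar2 (t k g h Tw TD : nat) : t%:Z + k%:Z + g%:Z + 1 <= TD%:Z ->
  (TD <= Tw + h.+1)%N -> (h <= k)%N -> (t + (k - h) + g <= Tw)%N.
Proof. lia. Qed.
Lemma ar3 (t T T' : nat) : (t <= T')%N -> (T' <= T + 1)%N -> (t - 1 <= T)%N.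
Proof. lia. Qed.
Lemma ar4 (a b c h : nat) : (a <= b + h)%N -> (b <= c + 1)%N -> (a <= c + h.+1)%N.
Proof. lia. Qed.

Section P2b.
Variable R : realType.
Notation pt d := (d.-tuple (measurableTypeR R)).
Variable d : nat.
Variables (eps delta : R) (t : nat).
Hypothesis heps : 0 < eps.
Hypothesis hdelta : 0 < delta.
Hypothesis ht : (0 < t)%N.
Notation mu := (leb R d).
Notation I w := (\int[mu]_(y in setT) mech_density eps t w y)%E.

Lemma part2 (D z : database R d) :
  z \in Unsafe eps (4 * expR eps * delta) t ->
  M eps delta t D < (dH D z)%:Z.
Proof.
move=> uns.
have hDz := Ttilde_chain (chain_dH D z).
case: (ltP (M eps delta t D) (dH D z)%:Z) => // hM; exfalso.
case: (M_cases eps delta t D) => [Mm1|[[k kt] [gk Mk]]].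
  by rewrite Mm1 in hM; lia.
rewrite Mk /= lez_nat in hM.
move: uns; rewrite inE /Unsafe /= => uns; apply: uns => z' nb.
case: gk => g [g0 /= [aoo b0 rat]].
set a := V _ D in aoo rat; set b := V _ D in b0 rat.
set A := [set y : pt d | (t - 1 <= Ttilde z y)%N].
have mA : measurable A by exact: mTsetn.
have hzz' := fun y => Ttilde_nb y nb.
have Aa : (mu A <= a)%E.
  rewrite /a VE; apply: le_measure; rewrite ?inE //; first exact: mTset.
  move=> y; rewrite /A /= => hy; have [h1 h2] := hDz y; exact: ar1 hy h1 hM.
have Aoo : (mu A < +oo)%E by exact: le_lt_trans aoo.
have ba : (b <= a)%E by apply: Vanti; clear -hM; lia.
have boo : (b < +oo)%E by exact: le_lt_trans aoo.
have fb0 : 0 < fine b by rewrite fine_gt0 // b0 boo.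
have eb : b = (fine b)%:E by rewrite fineK // ge0_fin_numE // ltW.
set q := (t + (k - dH D z) + g)%N.
have tq : (t <= q)%N by rewrite /q -addnA leq_addr.
have Zlow : forall w : database R d, (forall y, (Ttilde D y <= Ttilde w y + (dH D z).+1)%N) ->
    (forall y, (t <= Ttilde w y)%N -> A y) ->
    cc eps q * fine b <= fine (I w).
  move=> w hw hA.
  have fI := I_fin heps mA Aoo hA.
  have [eZ _ _] := int_fin measurableT fI.
  have l := int_lower heps w tq.
  have bB : (b <= mu [set y | (q <= Ttilde w y)%N])%E.
    rewrite /b VE; apply: le_measure; rewrite ?inE; try exact: mTset; try exact: mTsetn.
    move=> y /= hy; exact: ar2 hy (hw y) hM.
  rewrite -lee_fin EFinM -eb -eZ; apply: le_trans l.
  by apply: lee_pmul => //; [rewrite lee_fin; exact: expR_ge0|exact: ltW].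
have hA1 : forall y, (t <= Ttilde z y)%N -> A y.
  by move=> y hy; rewrite /A /=; apply: ar3 hy _; rewrite addn1.
have hA2 : forall y, (t <= Ttilde z' y)%N -> A y.
  by move=> y hy; rewrite /A /=; have [h1 h2] := hzz' y; exact: ar3 hy h1.
have Z1 : cc eps q * fine b <= fine (I z).
  by apply: Zlow => // y; have [h1 h2] := hDz y; apply: ar4 h2 _; rewrite addn1.
have Z2 : cc eps q * fine b <= fine (I z').
  by apply: Zlow => // y; have [h1 h2] := hDz y; have [h3 h4] := hzz' y; exact: ar4 h2 h4.
have cq0 : 0 < cc eps q by exact: expR_gt0.
have ctX : cc eps t <= expR (- (eps * g%:R) / 2) * cc eps q.
  rewrite /cc -expRD ler_expR.
  have : (t%:R + g%:R <= q%:R :> R).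
    by rewrite -natrD ler_nat /q addnAC leq_addr.
  move=> H; have H2 : 0 <= q%:R - t%:R - g%:R :> R by lra.
  have := mulr_ge0 (ltW heps) H2; clear; nra.
have fA0 : 0 <= fine (mu A) by apply: fine_ge0; exact: measure_ge0.
have fAa : fine (mu A) <= fine a.
  apply: fine_mono => //; exact: measure_ge0.
have E1 : cc eps t * fine (mu A) <= delta * fine (I z).
  apply: (Ebound fb0 fA0 fAa (expR_ge0 _) ctX (expR_ge0 _) cq0 rat Z1 hdelta).
have E2 : cc eps t * fine (mu A) <= delta * fine (I z').
  apply: (Ebound fb0 fA0 fAa (expR_ge0 _) ctX (expR_ge0 _) cq0 rat Z2 hdelta).
have P1 : 0 < fine (I z) by apply: lt_le_trans Z1; exact: mulr_gt0.
have P2 : 0 < fine (I z') by apply: lt_le_trans Z2; exact: mulr_gt0.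
move=> W mW; split.
- apply: (one_dir heps mA Aoo mW) => //.
  + by move=> y; case: (hzz' y).
  + by move=> y; case: (hzz' y).
- apply: (one_dir heps mA Aoo mW) => //.
  + by move=> y; case: (hzz' y).
  + by move=> y; case: (hzz' y).
Qed.
End P2b.

Unset Implicit Arguments.

Theorem mainTheorem2 (R : realType) (d : nat) (eps delta : R) (t : nat)
  (hd : (0 < d)%N) (heps : 0 < eps) (hdelta : 0 < delta) (ht : (0 < t)%N) :
  (forall D D' : database R d, neighbor D D' ->
     `|M eps delta t D - M eps delta t D'| <= 1) /\
  (forall D z : database R d,
     (0 < lebesgue_d d [set y | (t <= Ttilde z y)%N])%E ->
     (forall z', neighbor z z' ->
        (0 < lebesgue_d d [set y | (t <= Ttilde z' y)%N])%E) ->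
     z \in Unsafe eps (4 * expR eps * delta) t ->
     M eps delta t D < (dH D z)%:Z).
Proof.
split.
- move=> D D' nb; apply: part1 => //.
- move=> D z _ _ uns; apply: part2 => //.
Qed.
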